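(* Let $r\ge 2$ and let $\pi$ be an $r$-homogeneous strongly log-concave distribution on $2^{[n]}$, and let $P_{\mathrm{BX},\pi}$ be the corresponding bases-exchange walk. Then the modified log-Sobolev constant satisfies $$\rho(P_{\mathrm{BX},\pi})\ge \frac{1}{r}.$$
   Context: A distribution $\pi:2^{[n]}\to\mathbb{R}_{\ge0}$ has generating polynomial $g_\pi(x)=\sum_{S\subseteq[n]}\pi(S)\prod_{i\in S}x_i$. It is $r$-homogeneous if $\pi(S)>0$ only when $|S|=r$. A polynomial $p$ with nonnegative coefficients is log-concave at $x\in\mathbb{R}^n_{\ge0}$ if the Hessian $\nabla^2\log p$ is negative semidefinite at $x$; it is strongly log-concave if for every index set $I\subseteq[n]$, $\partial_I p=\prod_{i\in I}\frac{\partial}{\partial x_i}p$ is log-concave at the all-ones vector. $\pi$ is strongly log-concave if $g_\pi$ is. Let $\Omega$ be the support of $\pi$ (its elements are called bases). The bases-exchange walk $P_{\mathrm{BX},\pi}$ on $\Omega$: from the current $B$, remove an element of $B$ chosen uniformly at random to get $S$, then move to a basis $B'\in\Omega$ with $B'\supset S$ with probability proportional to $\pi(B')$. For a reversible Markov chain $P$ on a finite set $\Omega$ with stationary distribution $\pi$, the Dirichlet form is $\mathcal{E}_P(f,g)=\sum_{x,y\in\Omega}\pi(x)f(x)[I-P](x,y)g(y)$, the entropy of $f:\Omega\to\mathbb{R}_{\ge0}$ is $\mathrm{Ent}_\pi(f)=\mathbb{E}_\pi(f\log f)-\mathbb{E}_\pi f\log\mathbb{E}_\pi f$ (with $0\log0=0$,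 natural log), and the modified log-Sobolev constant is $\rho(P)=\inf\{\mathcal{E}_P(f,\log f)/\mathrm{Ent}_\pi(f): f:\Omega\to\mathbb{R}_{\ge0},\ \mathrm{Ent}_\pi(f)\ne0\}$. *)

(* Defs.v *)
From HB Require Import structures.
From mathcomp Require Import all_boot all_order all_algebra.
From mathcomp Require Import all_classical all_reals all_analysis.
Set Implicit Arguments. Unset Strict Implicit. Unset Printing Implicit Defensive.
Import Order.TTheory GRing.Theory Num.Theory.
Import numFieldNormedType.Exports.
Local Open Scope ring_scope.

Section Defs.
Variables (R : realType) (n : nat).

(* Subsets of [n] are {set 'I_n}; points of R^n are row vectors 'rV[R]_n. *)
Definition dist_on (pi : {set 'I_n} -> R) : Prop :=
  (forall S, 0 <= pi S) /\ \sum_(S : {set 'I_n}) pi S = 1.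

Definition homogeneous (r : nat) (pi : {set 'I_n} -> R) : Prop :=
  forall S, 0 < pi S -> #|S| = r.

Definition gen_poly (pi : {set 'I_n} -> R) (x : 'rV[R]_n) : R :=
  \sum_(S : {set 'I_n}) pi S * \prod_(i in S) x ord0 i.

Definition basis_vec (i : 'I_n) : 'rV[R]_n := delta_mx ord0 i.

Definition pderiv (i : 'I_n) (f : 'rV[R]_n -> R) : 'rV[R]_n -> R :=
  fun x => derive f x (basis_vec i).

Definition pderivI (I : {set 'I_n}) (f : 'rV[R]_n -> R) : 'rV[R]_n -> R :=
  foldr pderiv f (enum I).

Definition hessian (f : 'rV[R]_n -> R) (x : 'rV[R]_n) : 'M[R]_n :=
  \matrix_(i, j) pderiv i (pderiv j f) x.

Definition nsd (M : 'M[R]_n) : Prop :=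
  forall v : 'rV[R]_n, (v *m M *m v^T) ord0 ord0 <= 0.

(* p log-concave at x: Hessian of log p is NSD at x.
   (MathComp's ln is 0 on nonpositive reals, so the zero polynomial is
   log-concave, matching the usual convention.) *)
Definition log_concave_at (p : 'rV[R]_n -> R) (x : 'rV[R]_n) : Prop :=
  nsd (hessian (fun y => ln (p y)) x).

Definition strongly_log_concave_poly (p : 'rV[R]_n -> R) : Prop :=
  forall I : {set 'I_n}, log_concave_at (pderivI I p) (const_mx 1).

Definition strongly_log_concave (pi : {set 'I_n} -> R) : Prop :=
  strongly_log_concave_poly (gen_poly pi).

Definition up_weight (pi : {set 'I_n} -> R) (S : {set 'I_n}) : R :=
  \sum_(C : {set 'I_n} | S \subset C) pi C.

(* Bases-exchange walk transition kernel (meaningful for B in the support). *)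
Definition bx_walk (pi : {set 'I_n} -> R) (B B' : {set 'I_n}) : R :=
  \sum_(i in B) (#|B|%:R)^-1 *
     (if (B :\ i) \subset B' then pi B' / up_weight pi (B :\ i) else 0).

(* Dirichlet form; terms outside the support have weight 0. *)
Definition dirichlet (pi : {set 'I_n} -> R)
    (P : {set 'I_n} -> {set 'I_n} -> R) (f g : {set 'I_n} -> R) : R :=
  \sum_(x : {set 'I_n}) \sum_(y : {set 'I_n})
     pi x * f x * ((x == y)%:R - P x y) * g y.

Definition expect (pi : {set 'I_n} -> R) (f : {set 'I_n} -> R) : R :=
  \sum_(x : {set 'I_n}) pi x * f x.

Definition entropy (pi : {set 'I_n} -> R) (f : {set 'I_n} -> R) : R :=
  expect pi (fun x => f x * ln (f x)) - expect pi f * ln (expect pi f).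

(* rho(P) >= c, i.e. c is below every ratio E(f, log f)/Ent(f). *)
Definition mlsi_lower_bound (pi : {set 'I_n} -> R)
    (P : {set 'I_n} -> {set 'I_n} -> R) (c : R) : Prop :=
  forall f : {set 'I_n} -> R,
    (forall x, 0 < pi x -> 0 < f x) ->
    entropy pi f != 0 ->
    c <= dirichlet pi P f (fun x => ln (f x)) / entropy pi f.

End Defs.

(* Main.v *)
Require Import Defs.
From HB Require Import structures.
From mathcomp Require Import all_boot all_order all_algebra.
From mathcomp Require Import all_classical all_reals all_analysis.
From mathcomp Require Import ring lra.
Import Order.TTheory GRing.Theory Num.Theory.
Import numFieldNormedType.Exports.
Local Open Scope ring_scope.

Set Implicit Arguments. Unset Strict Implicit. Unset Printing Implicit Defensive.
Section Basic.
Variable R : realType.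

Lemma ln_le_sub1 (x : R) : 0 < x -> ln x <= x - 1.
Proof.
move=> x0; have := @le_ln1Dx R (x - 1); rewrite (_ : 1 + (x - 1) = x); last ring.
move=> H; apply: H; lra.
Qed.
Lemma dummy0 : True. Proof.
done.
Qed.

Lemma LS_term (a b A B : R) : 0 <= a -> 0 <= b -> (0 < a -> 0 < b) -> 0 < A -> 0 < B ->
  a * (ln (A / B) - ln (a / b)) <= A * b / B - a.
Proof.
move=> a0 b0 ab A0 B0.
have [->|ap] := eqVneq a 0.
  by rewrite mul0r subr0; apply: divr_ge0; [apply: mulr_ge0; lra|lra].
have ap' : 0 < a by rewrite lt_def ap a0.
have bp := ab ap'.
have AB : 0 < A / B by rewrite divr_gt0.
have ab' : 0 < a / b by rewrite divr_gt0.
rewrite -ln_div ?posrE //.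
have := ln_le_sub1 (divr_gt0 AB ab') => H.
apply: le_trans (ler_wpM2l (ltW ap') H) _.
rewrite le_eqVlt; apply/orP; left; apply/eqP; field.
by apply/and3P; split; rewrite gt_eqF.
Qed.

Lemma log_sum (I : finType) (a b : I -> R) :
  (forall k, 0 <= a k) -> (forall k, 0 <= b k) -> (forall k, 0 < a k -> 0 < b k) ->
  0 < \sum_k a k ->
  (\sum_k a k) * ln ((\sum_k a k) / (\sum_k b k)) <= \sum_k a k * ln (a k / b k).
Proof.
move=> a0 b0 ab A0.
have [k ak] : exists k, 0 < a k.
  case: (pickP (fun k => 0 < a k)) => [k /= ak|H]; first by exists k.
  have : \sum_k a k = 0.
    by apply: big1 => k _; have := H k; rewrite /= lt_def a0 andbT => /negbFE/eqP.
  by move=> E; rewrite E ltxx in A0.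
have B0 : 0 < \sum_k b k.
  rewrite (bigD1 k) //=; apply: (lt_le_trans (ab _ ak)).
  by rewrite lerDl sumr_ge0.
rewrite -subr_ge0 mulr_suml -sumrB.
have H : \sum_k (a k * ln ((\sum_k a k) / (\sum_k b k)) - a k * ln (a k / b k))
       <= \sum_k ((\sum_k a k) * b k / (\sum_k b k) - a k).
  apply: ler_sum => i _; rewrite -mulrBr; exact: (LS_term (a0 i) (b0 i) (ab i) A0 B0).
have E : \sum_k ((\sum_k a k) * b k / (\sum_k b k) - a k) = 0.
  rewrite sumrB -mulr_suml -mulr_sumr -mulrA divff ?gt_eqF // mulr1 subrr //.
have H' : forall (F G : I -> R), \sum_i (F i - G i) = - \sum_i (G i - F i).
  by move=> F G; rewrite -sumrN; apply: eq_bigr => j _; rewrite opprB.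
rewrite H' oppr_ge0; apply: le_trans H _; rewrite E //.
Qed.
Lemma chain (B : nat -> R) (r' : nat) :
  (forall j, (j.+2 <= r'.+1)%N -> 2 * B j.+1 <= B j + B j.+2) ->
  B r'.+1 - B 0 <= r'.+1%:R * (B r'.+1 - B r').
Proof.
move=> conv.
suff H : forall k, (k <= r')%N -> B k.+1 - B 0 <= k.+1%:R * (B k.+1 - B k).
  exact: H.
elim=> [|k IH] Hk; first by rewrite mul1r.
have IH' := IH (ltnW Hk).
have cv := conv k Hk.
have K0 : (0 <= k.+1%:R :> R) by rewrite ler0n.
have M : k.+1%:R * (B k.+1 - B k) <= k.+1%:R * (B k.+2 - B k.+1).
  apply: ler_wpM2l => //; lra.
rewrite -natr1; lra.
Qed.
End Basic.
Section Comb.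
Variables (R : realType) (n r : nat).
Local Notation T := {set 'I_n}.

Definition sup (rho : T -> R) (S : T) : R := \sum_(C : T | S \subset C) rho C.

Lemma sup_top (rho : T -> R) (U : T) : (forall C, rho C != 0 -> #|C| = r) ->
  #|U| = r -> sup rho U = rho U.
Proof.
move=> hr Ur; rewrite /sup (bigD1 U) //= big1 ?addr0 // => C /andP [UC CU].
apply/eqP; apply: contraT => /hr Cr.
have : U == C by rewrite eqEcard UC Cr Ur leqnn.
by rewrite eq_sym (negPf CU).
Qed.

Lemma sup_ext (rho : T -> R) (S : T) : (forall C, rho C != 0 -> #|C| = r) ->
  \sum_i (if i \in S then 0 else sup rho (i |: S)) = (r - #|S|)%:R * sup rho S.
Proof.
move=> hr.
transitivity (\sum_i \sum_(C : T) (if (i \notin S) && (i |: S \subset C) then rho C else 0)).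
  apply: eq_bigr => i _; case: ifP => iS /=; first by rewrite big1.
  by rewrite /sup big_mkcond.
rewrite exchange_big /= /sup mulr_sumr [RHS]big_mkcond /=; apply: eq_bigr => C _.
case SC: (S \subset C); last first.
  apply: big1 => i _; case: ifP => // /andP [_ H].
  by rewrite (fintype.subset_trans (finset.subsetUr _ _) H) in SC.
transitivity (\sum_(i in C :\: S) rho C).
  rewrite [RHS]big_mkcond; apply: (eq_bigr (fun i => if i \in C :\: S then rho C else 0)) => i _; rewrite !inE finset.subUset finset.sub1set SC andbT andbC //.
rewrite sumr_const.
have [->|rC] := eqVneq (rho C) 0; first by rewrite mul0rn mulr0.
rewrite cardsD (finset.setIidPr SC) (hr _ rC) mulr_natl //.
Qed.

Lemma count_lift (Phi : T -> R) (k : nat) :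
  \sum_(S : T | #|S| == k) \sum_i (if i \in S then 0 else Phi (i |: S)) =
  k.+1%:R * \sum_(U : T | #|U| == k.+1) Phi U.
Proof.
rewrite exchange_big /=.
transitivity (\sum_i \sum_(U : T | (#|U| == k.+1) && (i \in U)) Phi U).
  apply: eq_bigr => i _.
  rewrite [RHS](reindex_onto (fun S => i |: S) (fun U => U :\ i)) /=; last first.
    by move=> U /andP [_ iU]; rewrite finset.setD1K.
  rewrite [RHS]big_mkcond [LHS]big_mkcond; apply: eq_bigr => S _.
  case iS: (i \in S) => /=.
    rewrite if_same; case: ifP => // /andP [_ /eqP E].
    have : i \notin (i |: S) :\ i by rewrite !inE eqxx.
    by rewrite E iS.
  rewrite setU11 andbT setU1K ?iS // eqxx andbT cardsU1 iS add1n eqSS //.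
rewrite (exchange_big_dep (fun U : T => #|U| == k.+1)) /=; last by move=> i U _ /andP [].
rewrite mulr_sumr; apply: eq_bigr => U /eqP Uk.
rewrite (eq_bigl (fun i => i \in U)); last by move=> i; rewrite Uk eqxx.
by rewrite sumr_const Uk mulr_natl.
Qed.
Lemma lift_sum (H : T -> 'I_n -> R) :
  \sum_(x : T) \sum_(i in x) H x i =
  \sum_(S : T) \sum_i (if i \in S then 0 else H (i |: S) i).
Proof.
rewrite (exchange_big_dep xpredT) //= [RHS]exchange_big /=; apply: eq_bigr => i _.
rewrite (reindex_onto (fun S => i |: S) (fun U => U :\ i)) /=; last first.
  by move=> U iU; rewrite finset.setD1K.
rewrite [LHS]big_mkcond; apply: eq_bigr => S _.
case iS: (i \in S) => /=.
  case: ifP => // /andP [_ /eqP E].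
  have : i \notin (i |: S) :\ i by rewrite !inE eqxx.
  by rewrite E iS.
by rewrite setU11 setU1K ?iS // eqxx.
Qed.
End Comb.

Section Edge.
Variables (R : realType) (n r : nat) (pi f : {set 'I_n} -> R).
Local Notation T := {set 'I_n}.
Hypothesis pi0 : forall S, 0 <= pi S.
Hypothesis hom : forall S, 0 < pi S -> #|S| = r.
Hypothesis fpos : forall S, 0 < pi S -> 0 < f S.

Definition pf (C : T) := pi C * f C.
Definition w (S : T) := sup pi S.
Definition Fw (S : T) := sup pf S.
Definition Phi (S : T) := Fw S * ln (Fw S / w S).

Lemma pf0 C : 0 <= pf C.
Proof.
rewrite /pf; have [->|p] := eqVneq (pi C) 0; first by rewrite mul0r.
have pp : 0 < pi C by rewrite lt_def p pi0.
by rewrite mulr_ge0 // ltW // fpos.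
Qed.

Lemma hr_pi C : pi C != 0 -> #|C| = r.
Proof. by move=> p; apply: hom; rewrite lt_def p pi0. Qed.

Lemma hr_pf C : pf C != 0 -> #|C| = r.
Proof. move=> p; apply: hr_pi; apply: contraNneq p => /eqP E; by rewrite /pf (eqP E) mul0r. Qed.

Lemma sup_ge0 (rho : T -> R) S : (forall C, 0 <= rho C) -> 0 <= sup rho S.
Proof. by move=> h; apply: sumr_ge0. Qed.

Lemma sup_mono (rho : T -> R) (S S' : T) : (forall C, 0 <= rho C) -> S \subset S' ->
  sup rho S' <= sup rho S.
Proof.
move=> h SS; rewrite /sup [X in _ <= X]big_mkcond [X in X <= _]big_mkcond.
apply: ler_sum => C _; case: ifP => H.
  by rewrite (fintype.subset_trans SS H).
by case: ifP.
Qed.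

Lemma w_ge0 S : 0 <= w S. Proof. exact: sup_ge0. Qed.
Lemma Fw_ge0 S : 0 <= Fw S. Proof. exact: sup_ge0 pf0. Qed.

Lemma w0F0 S : w S = 0 -> Fw S = 0.
Proof.
move=> /(psumr_eq0P (fun C _ => pi0 C)) H.
by apply: big1 => C /H; rewrite /pf => ->; rewrite mul0r.
Qed.

Lemma Fpos_w S : 0 < Fw S -> 0 < w S.
Proof.
move=> F; rewrite lt_def w_ge0 andbT; apply/eqP => /w0F0 E.
by rewrite E ltxx in F.
Qed.

Lemma sum_pos_ex (I : finType) (a : I -> R) : 0 < \sum_k a k -> exists k, 0 < a k.
Proof.
move=> A0; case: (pickP (fun k => 0 < a k)) => [k /= ak|H]; first by exists k.
have : \sum_k a k <= 0 by apply: sumr_le0 => k _; have := H k; rewrite /= ltNge => /negbFE.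
by rewrite leNgt A0.
Qed.

Lemma wpos_F S : 0 < w S -> 0 < Fw S.
Proof.
rewrite /w /sup big_mkcond => /sum_pos_ex [C]; case: ifP => SC pC; last by rewrite ltxx in pC.
rewrite /Fw /sup (bigD1 C) //=; apply: (@lt_le_trans _ _ (pf C)).
  by rewrite /pf mulr_gt0 // fpos.
by rewrite lerDl; apply: sumr_ge0 => ? _; exact: pf0.
Qed.

Lemma ln_split (x y u v : R) : 0 < x -> 0 < y -> 0 < u -> 0 < v ->
  ln (x / (y * u * v)) = ln (x / y) - ln u - ln v.
Proof.
move=> x0 y0 u0 v0.
rewrite (_ : x / (y * u * v) = (x / y) * u^-1 * v^-1); last first.
  by field; apply/and3P; split; rewrite gt_eqF.
rewrite !lnM ?lnV ?posrE ?invr_gt0 ?mulr_gt0 ?divr_gt0 ?invr_gt0 //.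
Qed.

Definition gi (S : T) i := if i \in S then 0 else w (i |: S).
Definition gij (S : T) i j :=
  if (i \notin S) && (j \notin S) && (i != j) then w (i |: (j |: S)) else 0.
Definition Fi (S : T) i := if i \in S then 0 else Fw (i |: S).
Definition Fij (S : T) i j :=
  if (i \notin S) && (j \notin S) && (i != j) then Fw (i |: (j |: S)) else 0.
Definition P1 (S : T) := \sum_i (if i \in S then 0 else Phi (i |: S)).
Definition P2 (S : T) := \sum_i \sum_j
  (if (i \notin S) && (j \notin S) && (i != j) then Phi (i |: (j |: S)) else 0).

Lemma cond_sym (S : T) i j :
  (i \notin S) && (j \notin S) && (i != j) = (j \notin S) && (i \notin S) && (j != i).
Proof. by rewrite (eq_sym i j) [(i \notin S) && _]andbC. Qed.

Lemma pair_swap_sum (G : T -> R) (S : T) i :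
  \sum_j (if (i \notin S) && (j \notin S) && (i != j) then G (i |: (j |: S)) else 0) =
  if i \in S then 0 else \sum_j (if j \in i |: S then 0 else G (j |: (i |: S))).
Proof.
case: ifP => iS /=; first by rewrite big1.
apply: eq_bigr => j _; rewrite in_setU1 finset.setUCA.
by case: (j =P i) => [->|/eqP ji]; [rewrite eqxx andbF | rewrite eq_sym ji andbT /=; case: (j \in S)].
Qed.

Lemma sum_pair_sup (rho : T -> R) (S : T) i : (forall C, rho C != 0 -> #|C| = r) ->
  \sum_j (if (i \notin S) && (j \notin S) && (i != j) then sup rho (i |: (j |: S)) else 0)
  = (r - #|S|.+1)%:R * (if i \in S then 0 else sup rho (i |: S)).
Proof.
move=> hr; rewrite pair_swap_sum; case: ifP => iS; first by rewrite mulr0.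
by rewrite (sup_ext _ hr) cardsU1 iS.
Qed.

Lemma Phi_zero_above (S U : T) : w S = 0 -> S \subset U -> Phi U = 0.
Proof.
move=> W0 SU; have wU : w U = 0.
  by apply/eqP; rewrite eq_le w_ge0 andbT -W0; exact: sup_mono.
by rewrite /Phi (w0F0 wU) mul0r.
Qed.

Lemma gi_ge0 S i : 0 <= gi S i.
Proof. by rewrite /gi; case: ifP => _; rewrite ?w_ge0. Qed.
Lemma gij_ge0 S i j : 0 <= gij S i j.
Proof. by rewrite /gij; case: ifP => _; rewrite ?w_ge0. Qed.
Lemma Fi_ge0 S i : 0 <= Fi S i.
Proof. by rewrite /Fi; case: ifP => _; rewrite ?Fw_ge0. Qed.
Lemma Fij_ge0 S i j : 0 <= Fij S i j.
Proof. by rewrite /Fij; case: ifP => _; rewrite ?Fw_ge0. Qed.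

Lemma gi_g S i : gi S i * (Fi S i / gi S i) = Fi S i.
Proof.
have [E|nz] := eqVneq (gi S i) 0; last by rewrite mulrC divfK.
rewrite E mul0r; move: E; rewrite /gi /Fi; case: ifP => // _.
by move/w0F0 => ->.
Qed.

Hypothesis quad : forall S, 0 < w S -> forall v : 'I_n -> R,
  \sum_i gi S i * v i = 0 -> \sum_i \sum_j v i * v j * gij S i j <= 0.

Lemma edge (S : T) : (#|S|.+2 <= r)%N ->
  0 <= P2 S - 2 * (r - #|S|.+1)%:R * P1 S + (r - #|S|.+1)%:R * (r - #|S|)%:R * Phi S.
Proof.
move=> Sr.
set e : R := (r - #|S|.+1)%:R; set d : R := (r - #|S|)%:R.
have de : d = e + 1.
  by rewrite /d /e natr1 subnSK // ltnW.
have e1 : 1 <= e by rewrite /e ler1n subn_gt0.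
have [W0|Wp] := eqVneq (w S) 0.
  have -> : P1 S = 0.
    apply: big1 => i _; case: ifP => // _; apply: (Phi_zero_above W0).
    exact: finset.subsetUr.
  have -> : P2 S = 0.
    apply: big1 => i _; apply: big1 => j _; case: ifP => // _.
    apply: (Phi_zero_above W0).
    by rewrite finset.subsetU // finset.subsetUr orbT.
  by rewrite (Phi_zero_above W0 (subxx _)) !mulr0 subr0 addr0.
have W0 : 0 < w S by rewrite lt_def Wp w_ge0.
set W := w S.
have Fs0 : 0 < Fw S by exact: wpos_F.
set Fs := Fw S.
set m := Fs / W.
have m0 : 0 < m by rewrite divr_gt0.
have FsmW : Fs / m = W by rewrite /m; field; rewrite !gt_eqF.
pose g i := Fi S i / gi S i.
have g0 : forall i, 0 <= g i by move=> i; rewrite divr_ge0 ?Fi_ge0 ?gi_ge0.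
have s1 : \sum_i gi S i = d * W by exact: (sup_ext _ hr_pi).
have s2 : \sum_i Fi S i = d * Fs by exact: (sup_ext _ hr_pf).
have s3 : forall i, \sum_j gij S i j = e * gi S i.
  by move=> i; exact: (sum_pair_sup _ _ hr_pi).
have s4 : forall i, \sum_j Fij S i j = e * Fi S i.
  by move=> i; exact: (sum_pair_sup _ _ hr_pf).
have gsym : forall i j, gij S i j = gij S j i.
  by move=> i j; rewrite /gij cond_sym finset.setUCA.
have Fsym : forall i j, Fij S i j = Fij S j i.
  by move=> i j; rewrite /Fij cond_sym finset.setUCA.
have s3' : forall j, \sum_i gij S i j = e * gi S j.
  by move=> j; rewrite -s3; apply: eq_bigr => i _; rewrite gsym.
have s4' : forall j, \sum_i Fij S i j = e * Fi S j.
  by move=> j; rewrite -s4; apply: eq_bigr => i _; rewrite Fsym.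
pose v i := g i / m - 1.
have hv : \sum_i gi S i * v i = 0.
  transitivity (\sum_i (Fi S i / m - gi S i)).
    by apply: eq_bigr => i _; rewrite /v mulrBr mulr1 mulrA gi_g.
  by rewrite sumrB -mulr_suml s1 s2 -mulrA FsmW subrr.
have Hq := quad W0 hv.
set Q := \sum_i \sum_j g i * g j * gij S i j.
have EQ : \sum_i \sum_j v i * v j * gij S i j = Q / m ^+ 2 - e * d * W.
  have L1 : \sum_i \sum_j g i * gij S i j = e * d * Fs.
    transitivity (\sum_i g i * (e * gi S i)).
      by apply: eq_bigr => i _; rewrite -s3 mulr_sumr.
    transitivity (e * \sum_i Fi S i).
      rewrite mulr_sumr; apply: eq_bigr => i _.
      by rewrite -gi_g /g; ring.
    by rewrite s2 mulrA.
  have L2 : \sum_i \sum_j g j * gij S i j = e * d * Fs.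
    rewrite exchange_big /=; rewrite -L1; apply: eq_bigr => i _.
    by apply: eq_bigr => j _; rewrite gsym.
  have L3 : \sum_i \sum_j gij S i j = e * d * W.
    transitivity (\sum_i e * gi S i); first by apply: eq_bigr => i _; rewrite s3.
    by rewrite -mulr_sumr s1 mulrA.
  transitivity (\sum_i \sum_j (g i * g j * gij S i j / m ^+ 2 - g i * gij S i j / m
                  - g j * gij S i j / m + gij S i j)).
    apply: eq_bigr => i _; apply: eq_bigr => j _; rewrite /v.
    by field; rewrite gt_eqF.
  rewrite (eq_bigr (fun i => \sum_j (g i * g j * gij S i j / m ^+ 2) - \sum_j (g i * gij S i j / m)
                  - \sum_j (g j * gij S i j / m) + \sum_j gij S i j)); last first.
    by move=> i _; rewrite !big_split /= !sumrN.
  rewrite !big_split /= !sumrN.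
  rewrite /Q mulr_suml.

  have -> : \sum_i \sum_j g i * gij S i j / m = (e * d * Fs) / m.
    by rewrite -L1 mulr_suml; apply: eq_bigr => i _; rewrite mulr_suml.
  have -> : \sum_i \sum_j g j * gij S i j / m = (e * d * Fs) / m.
    by rewrite -L2 mulr_suml; apply: eq_bigr => i _; rewrite mulr_suml.
  rewrite L3.
  have -> : \sum_i \sum_j g i * g j * gij S i j / m ^+ 2 =
            \sum_i (\sum_j g i * g j * gij S i j) / m ^+ 2.
    by apply: eq_bigr => i _; rewrite mulr_suml.
  rewrite -!mulrA FsmW; ring.
have hQ : Q <= m ^+ 2 * (e * d * W).
  have : Q / m ^+ 2 - e * d * W <= 0 by rewrite -EQ.
  by rewrite subr_le0 ler_pdivrMr ?exprn_gt0 // mulrC.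
have e0 : 0 < e by apply: lt_le_trans e1.
have d0 : 0 < d by rewrite de; apply: lt_le_trans (ler_wpDr _ _) => //; lra.
pose a (p : 'I_n * 'I_n) := Fij S p.1 p.2.
pose b (p : 'I_n * 'I_n) := gij S p.1 p.2 * g p.1 * g p.2.
have sumA : \sum_p a p = e * d * Fs.
  rewrite /a -(pair_bigA _ (fun i j => Fij S i j)) /=.
  transitivity (\sum_i e * Fi S i); first by apply: eq_bigr => i _; rewrite s4.
  by rewrite -mulr_sumr s2 mulrA.
have sumB : \sum_p b p = Q.
  rewrite /b -(pair_bigA _ (fun i j => gij S i j * g i * g j)) /=.
  by apply: eq_bigr => i _; apply: eq_bigr => j _; ring.
have a0 : forall p, 0 <= a p by move=> p; exact: Fij_ge0.
have b0 : forall p, 0 <= b p.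
  move=> p; rewrite /b; apply: mulr_ge0; first apply: mulr_ge0.
  - exact: gij_ge0.
  - exact: g0.
  - exact: g0.
have gpos : forall i, i \notin S -> 0 < Fw (i |: S) -> 0 < g i.
  move=> i iS Fp; rewrite /g /Fi /gi (negPf iS); apply: divr_gt0 => //.
  exact: Fpos_w.
have ab : forall p, 0 < a p -> 0 < b p.
  move=> [i j]; rewrite /a /b /Fij /gij /=.
  case: ifP => [/andP [/andP [iS jS] ij] Fp|]; last by rewrite ltxx.
  have wp := Fpos_w Fp.
  have Fip : 0 < Fw (i |: S).
    apply: lt_le_trans Fp (sup_mono pf0 _).
    exact: finset.setUS (finset.subsetUr _ _).
  have Fjp : 0 < Fw (j |: S).
    apply: lt_le_trans Fp (sup_mono pf0 _).
    exact: finset.subsetUr.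
  apply: mulr_gt0; first apply: mulr_gt0 => //.
  - exact: gpos.
  - exact: gpos.
have A0 : 0 < \sum_p a p by rewrite sumA; apply: mulr_gt0 => //; exact: mulr_gt0.
have LS := log_sum a0 b0 ab A0.
have B0 : 0 < \sum_p b p.
  have [p ap] := sum_pos_ex A0.
  rewrite (bigD1 p) //=; apply: (@lt_le_trans _ _ (b p)); first exact: ab.
  by rewrite lerDl; apply: sumr_ge0 => ? _; exact: b0.
have Fsm : Fs = m * W by rewrite /m; field; rewrite gt_eqF.
have step : - ln m <= ln ((\sum_p a p) / (\sum_p b p)).
  rewrite -lnV ?posrE // ler_ln ?posrE ?invr_gt0 ?divr_gt0 //.
  rewrite ler_pdivlMr // sumA sumB.
  apply: (le_trans (ler_wpM2l _ hQ)); first by rewrite invr_ge0 ltW.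
  rewrite Fsm le_eqVlt; apply/orP; left; apply/eqP.
  field; by rewrite gt_eqF.
have key1 : (\sum_p a p) * (- ln m) <= \sum_p a p * ln (a p / b p).
  apply: le_trans LS; apply: ler_wpM2l => //; exact: ltW.
have dec : forall p, a p * ln (a p / b p) =
  (if (p.1 \notin S) && (p.2 \notin S) && (p.1 != p.2) then Phi (p.1 |: (p.2 |: S)) else 0)
   - a p * ln (g p.1) - a p * ln (g p.2).
  move=> [i j]; rewrite /a /b /Fij /=.
  case: ifP => [/andP [/andP [iS jS] ij]|]; last by rewrite !mul0r !subr0.
  have [F0|Fp] := eqVneq (Fw (i |: (j |: S))) 0.
    by rewrite /Phi F0 !mul0r !subr0.
  have Fp' : 0 < Fw (i |: (j |: S)) by rewrite lt_def Fp Fw_ge0.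
  have wp := Fpos_w Fp'.
  have Fip : 0 < Fw (i |: S).
    apply: lt_le_trans Fp' (sup_mono pf0 _).
    exact: finset.setUS (finset.subsetUr _ _).
  have Fjp : 0 < Fw (j |: S).
    apply: lt_le_trans Fp' (sup_mono pf0 _).
    exact: finset.subsetUr.
  rewrite /gij iS jS ij /= ln_split ?gpos //.
  rewrite /Phi; ring.
have sumP2 : \sum_p (if (p.1 \notin S) && (p.2 \notin S) && (p.1 != p.2)
                    then Phi (p.1 |: (p.2 |: S)) else 0) = P2 S.
  by rewrite /P2 (pair_bigA _ (fun i j => if (i \notin S) && (j \notin S) && (i != j)
                    then Phi (i |: (j |: S)) else 0)).
have FiPhi : forall i, Fi S i * ln (g i) = if i \in S then 0 else Phi (i |: S).
  by move=> i; rewrite /g /Fi /gi /Phi; case: ifP => _; rewrite ?mul0r.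
have sumL1 : \sum_p a p * ln (g p.1) = e * P1 S.
  rewrite /a -(pair_bigA _ (fun i j => Fij S i j * ln (g i))) /= /P1 mulr_sumr.
  apply: eq_bigr => i _; rewrite -mulr_suml s4 -FiPhi; ring.
have sumL2 : \sum_p a p * ln (g p.2) = e * P1 S.
  rewrite /a -(pair_bigA _ (fun i j => Fij S i j * ln (g j))) /= exchange_big /= /P1 mulr_sumr.
  apply: eq_bigr => j _; rewrite -mulr_suml s4' -FiPhi; ring.
rewrite (eq_bigr _ (fun p _ => dec p)) !sumrB sumP2 sumL1 sumL2 sumA in key1.
have -> : Phi S = Fs * ln m by [].
have -> : P2 S - 2 * e * P1 S + e * d * (Fs * ln m) =
          (P2 S - e * P1 S - e * P1 S) - (e * d * Fs * - ln m) by ring.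
by rewrite subr_ge0.
Qed.

Definition Ak k := \sum_(S : T | #|S| == k) Phi S.
Definition Bk k := Ak k / ('C(r, k))%:R.

Lemma sum_P1 k : \sum_(S : T | #|S| == k) P1 S = k.+1%:R * Ak k.+1.
Proof. exact: count_lift. Qed.

Lemma sum_P2 k : \sum_(S : T | #|S| == k) P2 S = k.+1%:R * k.+2%:R * Ak k.+2.
Proof.
pose Psi (U : T) := \sum_j (if j \in U then 0 else Phi (j |: U)).
transitivity (\sum_(S : T | #|S| == k) \sum_i (if i \in S then 0 else Psi (i |: S))).
  by apply: eq_bigr => S _; rewrite /P2; apply: eq_bigr => i _; rewrite pair_swap_sum.
rewrite count_lift /Psi (count_lift Phi k.+1) /Ak mulrA //.
Qed.

Lemma convex_B j : (j.+2 <= r)%N -> 2 * Bk j.+1 <= Bk j + Bk j.+2.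
Proof.
move=> jr.
set e : R := (r - j.+1)%:R; set d : R := (r - j)%:R.
have H : 0 <= \sum_(S : T | #|S| == j)
   (P2 S - 2 * e * P1 S + e * d * Phi S).
  apply: sumr_ge0 => S /eqP Sj; rewrite /e /d -Sj; apply: edge; rewrite Sj //.
rewrite big_split /= sumrB -!mulr_sumr sum_P1 sum_P2 in H.
rewrite (_ : \sum_(S : T | #|S| == j) Phi S = Ak j) // in H.
have c0 : (0 < ('C(r, j))%:R :> R) by rewrite ltr0n bin_gt0 ltnW // ltnW.
have c1 : (0 < ('C(r, j.+1))%:R :> R) by rewrite ltr0n bin_gt0 ltnW.
have c2 : (0 < ('C(r, j.+2))%:R :> R) by rewrite ltr0n bin_gt0.
have E1 : (j.+2%:R * ('C(r, j.+2))%:R = e * ('C(r, j.+1))%:R :> R).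
  by rewrite -!natrM mul_bin_left.
have E2 : (j.+1%:R * ('C(r, j.+1))%:R = d * ('C(r, j))%:R :> R).
  by rewrite -!natrM mul_bin_left.
have e0 : 0 < e by rewrite /e ltr0n subn_gt0.
have d0 : 0 < d by rewrite /d ltr0n subn_gt0 ltnW.
have K0 : 0 < e * d * ('C(r, j))%:R by rewrite !mulr_gt0.
rewrite /Bk.
set C0 := ('C(r, j))%:R in c0 E2 K0 *; set C1 := ('C(r, j.+1))%:R in c1 E1 E2 *;
set C2 := ('C(r, j.+2))%:R in c2 E1 *.
set a0 := Ak j in H *; set a1 := Ak j.+1 in H *; set a2 := Ak j.+2 in H *.
have HH : j.+1%:R * j.+2%:R * (a2 / C2 * C2) - 2 * e * (j.+1%:R * (a1 / C1 * C1)) +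
      e * d * (a0 / C0 * C0) = e * d * C0 * (a0 / C0 + a2 / C2 - 2 * (a1 / C1)).
  rewrite (_ : j.+1%:R * j.+2%:R * (a2 / C2 * C2) = j.+1%:R * (j.+2%:R * C2) * (a2 / C2)); last by ring.
  rewrite E1 (_ : j.+1%:R * (e * C1) = e * (j.+1%:R * C1)); last by ring.
  rewrite (_ : 2 * e * (j.+1%:R * (a1 / C1 * C1)) = 2 * e * (j.+1%:R * C1) * (a1 / C1)); last by ring.
  rewrite E2; ring.
rewrite !divfK ?gt_eqF // in HH.
by rewrite HH pmulr_rge0 // subr_ge0 in H.
Qed.

Lemma w_top (S : T) : #|S| = r -> w S = pi S.
Proof. by move=> Sr; rewrite /w (sup_top hr_pi Sr). Qed.
Lemma Fw_top (S : T) : #|S| = r -> Fw S = pf S.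
Proof. by move=> Sr; rewrite /Fw (sup_top hr_pf Sr). Qed.

Lemma pi_off (S : T) : #|S| != r -> pi S = 0.
Proof. by move=> Sr; apply/eqP; apply: contraNT Sr => /hr_pi ->. Qed.

Lemma Ak_r : Ak r = \sum_x pi x * f x * ln (f x).
Proof.
rewrite /Ak [RHS](bigID (fun x : T => #|x| == r)) /=.
rewrite [X in _ = _ + X]big1 ?addr0; last by move=> x /pi_off ->; rewrite !mul0r.
apply: eq_bigr => S /eqP Sr; rewrite /Phi Fw_top // w_top // /pf.
have [->|p] := eqVneq (pi S) 0; first by rewrite !mul0r.
by rewrite [pi S * f S / pi S]mulrAC divff // mul1r.
Qed.

Definition G (S : T) := sup (fun y => pi y * ln (f y)) S.

Lemma G_jensen S : 0 < w S -> G S <= w S * ln (Fw S / w S).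
Proof.
move=> W0; have F0 := wpos_F W0.
pose a (C : T) := if S \subset C then pi C else 0.
pose b (C : T) := if S \subset C then pf C else 0.
have a0 : forall C, 0 <= a C by move=> C; rewrite /a; case: ifP.
have b0 : forall C, 0 <= b C by move=> C; rewrite /b; case: ifP => _ //; exact: pf0.
have ab : forall C, 0 < a C -> 0 < b C.
  by move=> C; rewrite /a /b; case: ifP => _ // p; rewrite /pf mulr_gt0 // fpos.
have sa : \sum_C a C = w S by rewrite /w /sup [RHS]big_mkcond.
have sb : \sum_C b C = Fw S by rewrite /Fw /sup [RHS]big_mkcond.
have := log_sum a0 b0 ab; rewrite sa sb => /(_ W0).
have -> : \sum_C a C * ln (a C / b C) = - G S.
  rewrite /G /sup [X in _ = - X]big_mkcond -sumrN; apply: eq_bigr => C _; rewrite /a /b.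
  case: ifP => _; last by rewrite mul0r oppr0.
  have [->|p] := eqVneq (pi C) 0; first by rewrite !mul0r oppr0.
  have pp : 0 < pi C by rewrite lt_def p pi0.
  have fp := fpos pp.
  rewrite /pf invfM mulrA divff // mul1r lnV ?posrE //; ring.
rewrite -invf_div lnV ?posrE ?divr_gt0 // mulrN lerN2 //.
Qed.

Lemma G_term S : G S / w S * Fw S <= Phi S.
Proof.
have [W0|Wp] := eqVneq (w S) 0.
  by rewrite /Phi W0 invr0 !mulr0 mul0r ln0 // mulr0.
have W0 : 0 < w S by rewrite lt_def Wp w_ge0.
rewrite /Phi mulrC; apply: ler_wpM2l; first exact: Fw_ge0.
by rewrite ler_pdivrMr // mulrC; exact: G_jensen.
Qed.

Lemma sum_lift_pf (S : T) :
  \sum_i (if i \in S then 0 else pf (i |: S)) = if #|S|.+1 == r then Fw S else 0.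
Proof.
case: eqP => Sr.
  rewrite /Fw; have := sup_ext S hr_pf; rewrite -Sr subSnn mul1r => <-.
  apply: eq_bigr => i _; case: ifP => iS //.
  by rewrite (sup_top hr_pf) // cardsU1 iS.
apply: big1 => i _; case: ifP => iS //.
apply/eqP; apply: contraT => /hr_pf; rewrite cardsU1 iS add1n => E.
by rewrite E in Sr.
Qed.

Lemma X_eq (x : T) :
  \sum_y pi x * f x * bx_walk pi x y * ln (f y) =
  r%:R^-1 * \sum_(i in x) pf x / w (x :\ i) * G (x :\ i).
Proof.
have [p0|p] := eqVneq (pi x) 0.
  rewrite big1; last by move=> y _; rewrite p0 !mul0r.
  by rewrite big1 ?mulr0 // => i _; rewrite /pf p0 !mul0r.
have Ex := hr_pi p.
rewrite /bx_walk Ex mulr_sumr.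
transitivity (\sum_(y : T) \sum_(i in x) (pi x * f x * ((r%:R)^-1 *
   (if x :\ i \subset y then pi y / up_weight pi (x :\ i) else 0)) * ln (f y))).
  by apply: eq_bigr => y _; rewrite mulr_sumr mulr_suml.
rewrite exchange_big /=; apply: eq_bigr => i _.
rewrite /G /sup [X in _ = _ * (_ * X)]big_mkcond !mulr_sumr; apply: eq_bigr => y _.
rewrite (_ : up_weight pi (x :\ i) = w (x :\ i)) //.
case: ifP => _; last by rewrite !mulr0 mul0r.
rewrite /pf; ring.
Qed.

Lemma dir_bound : (0 < r)%N ->
  Ak r - Ak r.-1 / r%:R <= dirichlet pi (bx_walk pi) f (fun x => ln (f x)).
Proof.
move=> r0.
have E1 : dirichlet pi (bx_walk pi) f (fun x => ln (f x)) =
  \sum_x pi x * f x * ln (f x) - \sum_x \sum_y pi x * f x * bx_walk pi x y * ln (f y).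
  rewrite /dirichlet -sumrB; apply: eq_bigr => x _.
  rewrite (_ : \sum_y pi x * f x * ((x == y)%:R - bx_walk pi x y) * ln (f y) =
     \sum_y pi x * f x * (x == y)%:R * ln (f y) - \sum_y pi x * f x * bx_walk pi x y * ln (f y)); last first.
    by rewrite -sumrB; apply: eq_bigr => y _; ring.
  congr (_ - _); rewrite (bigD1 x) //= eqxx mulr1 big1 ?addr0 // => y yx.
  by rewrite eq_sym (negbTE yx) mulr0 mul0r.
rewrite E1 -Ak_r lerD2l lerN2.
rewrite (eq_bigr _ (fun x _ => X_eq x)) -mulr_sumr lift_sum.
have E2 : forall S : T, \sum_i (if i \in S then 0 else pf (i |: S) / w ((i |: S) :\ i) * G ((i |: S) :\ i))
   = G S / w S * (if #|S|.+1 == r then Fw S else 0).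
  move=> S; rewrite -sum_lift_pf mulr_sumr; apply: eq_bigr => i _.
  case: ifP => iS; first by rewrite mulr0.
  rewrite setU1K ?iS //; ring.
rewrite (eq_bigr _ (fun S _ => E2 S)) mulrC ler_wpM2r ?invr_ge0 ?ler0n //.
apply: (@le_trans _ _ (\sum_(S : T) (if #|S|.+1 == r then Phi S else 0))).
  apply: ler_sum => S _; case: ifP => _; [exact: G_term | by rewrite mulr0].
rewrite /Ak -big_mkcond /=.
rewrite (eq_bigl (fun S : T => #|S| == r.-1)) // => S.
by apply/eqP/eqP => [<- // | ->]; exact: prednK.
Qed.

Lemma Ak0 : Ak 0 = Phi finset.set0.
Proof. by rewrite /Ak (big_pred1 finset.set0) // => S; rewrite /= cards_eq0. Qed.

Lemma w_set0 : w finset.set0 = \sum_x pi x.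
Proof. by rewrite /w /sup; apply: eq_bigl => C; rewrite finset.sub0set. Qed.

Lemma Fw_set0 : Fw finset.set0 = \sum_x pi x * f x.
Proof. by rewrite /Fw /sup; apply: eq_bigl => C; rewrite finset.sub0set. Qed.

Lemma entropyE : \sum_x pi x = 1 -> entropy pi f = Ak r - Ak 0.
Proof.
move=> s1; rewrite /entropy /expect Ak_r Ak0 /Phi w_set0 s1 divr1 Fw_set0.
by congr (_ - _); apply: eq_bigr => x _; rewrite mulrA.
Qed.

Lemma entropy_ge0 : \sum_x pi x = 1 -> 0 <= Ak r - Ak 0.
Proof.
move=> s1.
have [x px] : exists x, 0 < pi x by apply: sum_pos_ex; rewrite s1 ltr01.
have ab : forall x, 0 < pf x -> 0 < pi x.
  move=> y; rewrite /pf; have [->|p] := eqVneq (pi y) 0; first by rewrite mul0r ltxx.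
  by move=> _; rewrite lt_def p pi0.
have A0 : 0 < \sum_x pf x.
  rewrite (bigD1 x) //=; apply: (@lt_le_trans _ _ (pf x)).
    by rewrite /pf mulr_gt0 // fpos.
  by rewrite lerDl; apply: sumr_ge0 => ? _; exact: pf0.
have := log_sum pf0 pi0 ab A0.
rewrite s1 divr1 Ak0 Ak_r /Phi w_set0 s1 divr1 Fw_set0 subr_ge0.
rewrite (_ : \sum_x pf x = \sum_x pi x * f x) //.
move=> H; apply: le_trans H _; rewrite le_eqVlt; apply/orP; left; apply/eqP.
apply: eq_bigr => y _; rewrite /pf.
have [->|p] := eqVneq (pi y) 0; first by rewrite !mul0r.
by rewrite [pi y * f y / pi y]mulrAC divff // mul1r.
Qed.

Lemma main_ineq : (1 < r)%N -> \sum_x pi x = 1 -> entropy pi f != 0 ->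
  (r%:R)^-1 <= dirichlet pi (bx_walk pi) f (fun x => ln (f x)) / entropy pi f.
Proof.
move=> r1 s1 En0.
have r0 : (0 < r)%N by apply: ltnW.
have Ege : 0 <= entropy pi f by rewrite entropyE //; exact: entropy_ge0.
have Ep : 0 < entropy pi f by rewrite lt_def En0 Ege.
set r' := r.-1.
have rr : r = r'.+1 by rewrite /r' prednK.
have ch := @chain R Bk r'.
rewrite -rr in ch. have ch' := ch (fun j hj => convex_B hj).

have Br : Bk r = Ak r by rewrite /Bk binn divr1.
have B0 : Bk 0 = Ak 0 by rewrite /Bk bin0 divr1.
have Br' : Bk r' = Ak r' / r%:R by rewrite /Bk rr binSn.
rewrite Br B0 Br' -entropyE // in ch'.
have D := dir_bound r0.
have rp : (0 < r%:R :> R) by rewrite ltr0n.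
rewrite ler_pdivlMr // mulrC ler_pdivrMr // mulrC.
apply: le_trans ch' _; apply: ler_wpM2l; first exact: ltW.
by rewrite /r' in D *.
Qed.

End Edge.
Section A.
Local Open Scope classical_set_scope.
Variables (R : realType) (n : nat).
Local Notation T := {set 'I_n}.

Definition mpol (c : T -> R) (D : T -> T) (x : 'rV[R]_n) : R :=
  \sum_(C : T) c C * \prod_(k in D C) x ord0 k.

Definition dc (i : 'I_n) (c : T -> R) (D : T -> T) : T -> R :=
  fun C => if i \in D C then c C else 0.
Definition dD (i : 'I_n) (D : T -> T) : T -> T := fun C => D C :\ i.

Lemma basis_shiftE i (h : R) (x : 'rV[R]_n) k :
  (h *: basis_vec R i + x) ord0 k = x ord0 k + (if k == i then h else 0).
Proof.
rewrite !mxE eqxx /=; case: eqP => _; last by rewrite mulr0 add0r addr0.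
by rewrite mulr1 addrC.
Qed.

Lemma mpol_shift c D i (h : R) x :
  mpol c D (h *: basis_vec R i + x) = mpol c D x + h * mpol (dc i c D) (dD i D) x.
Proof.
rewrite /mpol mulr_sumr -big_split /=; apply: eq_bigr => C _.
rewrite /dc /dD; case: ifP => iD.
  rewrite (bigD1 i) //= [in RHS](bigD1 i) //= basis_shiftE eqxx.
  rewrite (eq_bigr (fun k => x ord0 k)); last first.
    by move=> k /andP [_ /negPf ki]; rewrite basis_shiftE ki addr0.
  rewrite (eq_bigl (fun k => k \in D C :\ i)); last first.
    by move=> k; rewrite !inE andbC.
  ring.
rewrite mul0r mulr0 addr0; congr (_ * _); apply: eq_bigr => k kD.
by rewrite basis_shiftE; case: eqP => [ki|_]; [rewrite ki iD in kD | rewrite addr0].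
Qed.

Lemma isd_aff (a b : R) : is_derive (0:R) 1 (fun h : R => a + h * b) b.
Proof.
have H := is_deriveD (is_derive_cst a (0:R) 1) (is_deriveM (is_derive_id (0:R) 1) (is_derive_cst b (0:R) 1)).
apply: is_derive_eq H _. by rewrite /= scaler0 !add0r /GRing.scale /= mulr1.
Qed.

Lemma der_aff (a b : R) : derive (fun h : R => a + h * b) 0 1 = b.
Proof. by have [_ ->] := isd_aff a b. Qed.

Lemma der_ln_aff (a b : R) : 0 < a -> derive (fun h : R => ln (a + h * b)) 0 1 = b / a.
Proof.
move=> a0.
have H1 : is_derive ((fun h : R => a + h * b) 0) 1 (@ln R) a^-1.
  by rewrite mul0r addr0; apply: is_derive1_ln.
have H := @is_derive1_comp R (@ln R) (fun h => a + h * b) 0 a^-1 b H1 (isd_aff a b).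
by have [_ ->] := H; rewrite mulrC.
Qed.

Lemma der_frac (a b c d : R) : 0 < c ->
  derive (fun h : R => (a + h * b) / (c + h * d)) 0 1 = (b * c - a * d) / c ^+ 2.
Proof.
move=> c0.
have Hc : (fun h : R => c + h * d) 0 != 0 by rewrite /= mul0r addr0 gt_eqF.
have H := is_deriveM (isd_aff a b) (@is_deriveV R (fun h => c + h * d) 0 d 1 Hc (isd_aff c d)).
have [_ E] := H. rewrite /= in E. rewrite E !mul0r !addr0 /GRing.scale /=.
field. by rewrite gt_eqF.
Qed.
Lemma near_pos (c d : R) : 0 < c -> \forall h \near (0:R), 0 < c + h * d.
Proof.
move=> c0.
have H : (fun h : R => c + h * d) @ (0:R) --> c + 0 * d.
  apply: cvgD; first exact: cvg_cst.
  apply: cvgM; [exact: cvg_id | exact: cvg_cst].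
rewrite mul0r addr0 in H.
exact: (cvgr_gt _ H _ c0).
Qed.
Lemma derive_line (f : 'rV[R]_n -> R) x v (phi : R -> R) :
  (\forall h \near 0, f (h *: v + x) = phi h) -> derive f x v = derive phi 0 1.
Proof.
move=> H.
have H0 : f x = phi 0.
  have := nbhs_singleton H; by rewrite scale0r add0r.
rewrite /derive; congr (lim _).
have E : forall h, h%:A + 0 = h :> R by move=> h; rewrite addr0 /GRing.scale /= mulr1.
rewrite eqEsubset; split; apply/near_eq_cvg/cvg_within => /=.
  near=> h. rewrite /shift /= H0 E. congr (_ *: (_ - _)). near: h. by [].
near=> h. rewrite /shift /= H0 E. congr (_ *: (_ - _)). near: h. 
  by apply: filterS H => h' ->.
Unshelve. all: by end_near.
Qed.
Lemma pderiv_mpol c D i : pderiv i (mpol c D) = mpol (dc i c D) (dD i D).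
Proof.
apply: funext => x; rewrite /pderiv.
rewrite (@derive_line _ _ _ (fun h => mpol c D x + h * mpol (dc i c D) (dD i D) x)).
  exact: der_aff.
by near=> h; rewrite mpol_shift.
Unshelve. all: by end_near.
Qed.

Lemma pderiv_ln_mpol c D j y : 0 < mpol c D y ->
  pderiv j (fun y => ln (mpol c D y)) y = mpol (dc j c D) (dD j D) y / mpol c D y.
Proof.
move=> gy; rewrite /pderiv.
rewrite (@derive_line _ _ _ (fun h => ln (mpol c D y + h * mpol (dc j c D) (dD j D) y))).
  exact: der_ln_aff.
by near=> h; rewrite mpol_shift.
Unshelve. all: by end_near.
Qed.

Lemma hess_ln_mpol c D i j y : 0 < mpol c D y ->
  pderiv i (pderiv j (fun y => ln (mpol c D y))) y =
  (mpol (dc i (dc j c D) (dD j D)) (dD i (dD j D)) y * mpol c D y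
   - mpol (dc j c D) (dD j D) y * mpol (dc i c D) (dD i D) y) / (mpol c D y) ^+ 2.
Proof.
move=> gy; rewrite {1}/pderiv.
rewrite (@derive_line _ _ _ (fun h => (mpol (dc j c D) (dD j D) y + h * mpol (dc i (dc j c D) (dD j D)) (dD i (dD j D)) y) / (mpol c D y + h * mpol (dc i c D) (dD i D) y))).
  exact: der_frac.
near=> h.
rewrite pderiv_ln_mpol; last by rewrite mpol_shift; near: h; exact: near_pos.
by rewrite !mpol_shift.
Unshelve. all: by end_near.
Qed.

Lemma mpol_ext (c c' : T -> R) (D D' : T -> T) :
  (forall C, c C = c' C) -> (forall C, D C = D' C) -> mpol c D = mpol c' D'.
Proof.
move=> Hc HD; apply: funext => x; rewrite /mpol; apply: eq_bigr => C _.
by rewrite Hc HD.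
Qed.

Lemma mpol_one (c : T -> R) (D : T -> T) : mpol c D (const_mx 1) = \sum_C c C.
Proof.
rewrite /mpol; apply: eq_bigr => C _; rewrite big1 ?mulr1 // => k _; by rewrite mxE.
Qed.

Lemma foldr_mpol (pi : T -> R) (s : seq 'I_n) : uniq s ->
  foldr (@pderiv R n) (gen_poly pi) s =
  mpol (fun C => if [set x in s] \subset C then pi C else 0) (fun C => C :\: [set x in s]).
Proof.
elim: s => [|a s IH] /=.
  move=> _; apply: funext => x; rewrite /gen_poly /mpol; apply: eq_bigr => C _.
  have -> : [set x in [::]] = finset.set0 :> T by apply/setP => k; rewrite !inE.
  by rewrite finset.sub0set finset.setD0.
move=> /andP [aS us]; rewrite IH // pderiv_mpol; apply: mpol_ext => C.
  rewrite /dc !inE set_cons finset.subUset finset.sub1set.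
  by case: (a \in C); case: ([set x in s] \subset C); rewrite ?inE ?aS.
rewrite /dD set_cons; apply/setP => k; rewrite !inE negb_or.
by rewrite andbA [(k != a) && _]andbC.
Qed.
Lemma vMv (u : 'rV[R]_n) (M : 'M[R]_n) :
  (u *m M *m u^T) ord0 ord0 = \sum_i \sum_j u ord0 i * M i j * u ord0 j.
Proof.
rewrite mxE.
transitivity (\sum_j \sum_i u ord0 i * M i j * u ord0 j).
  by apply: eq_bigr => j _; rewrite !mxE mulr_suml.
by rewrite exchange_big.
Qed.

Lemma quad_of_slc (pi : T -> R) : strongly_log_concave pi ->
  forall S, 0 < w pi S -> forall v : 'I_n -> R,
  \sum_i gi pi S i * v i = 0 -> \sum_i \sum_j v i * v j * gij pi S i j <= 0.
Proof.
move=> slc S W0 v hv.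
have := slc S (\row_i v i).
rewrite /pderivI foldr_mpol ?enum_uniq // set_enum vMv.
set c := (fun C : T => if S \subset C then pi C else 0).
set D := (fun C : T => C :\: S).
have g1 : mpol c D (const_mx 1) = w pi S.
  by rewrite mpol_one /w /sup [RHS]big_mkcond.
have gi1 : forall i, mpol (dc i c D) (dD i D) (const_mx 1) = gi pi S i.
  move=> i; rewrite mpol_one /dc /gi /w /sup /D /c; case: ifP => iS.
    by apply: big1 => C _; rewrite !inE iS.
  rewrite [RHS]big_mkcond; apply: eq_bigr => C _.
  rewrite !inE iS finset.subUset finset.sub1set /=.
  by case: (i \in C); case: (S \subset C).
have gij1 : forall i j, mpol (dc i (dc j c D) (dD j D)) (dD i (dD j D)) (const_mx 1) = gij pi S i j.
  move=> i j; rewrite mpol_one /dc /gij /dD /w /sup /D /c.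
  case: ifP => [/andP [/andP [iS jS] ij]|H].
    rewrite [RHS]big_mkcond; apply: eq_bigr => C _.
    rewrite !inE (negPf iS) (negPf jS) (negPf ij) !finset.subUset !finset.sub1set /=.
    by case: (i \in C); case: (j \in C); case: (S \subset C).
  apply: big1 => C _; rewrite !inE.
  case: (i =P j) => [->|/eqP ij]; first by [].
  case iS: (i \in S); first by [].
  case jS: (j \in S) => /=; first by rewrite if_same.
  by move: H; rewrite iS jS ij.
set W := w pi S in W0 g1.
have gp : 0 < mpol c D (const_mx 1) by rewrite g1.
have EH : forall i j, (hessian (fun y => ln (mpol c D y)) (const_mx 1)) i j =
    (gij pi S i j * W - gi pi S j * gi pi S i) / W ^+ 2.
  by move=> i j; rewrite mxE hess_ln_mpol // gij1 gi1 gi1 g1.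
have E : \sum_i \sum_j (\row_i0 v i0) ord0 i *
    (hessian (fun y => ln (mpol c D y)) (const_mx 1)) i j * (\row_i0 v i0) ord0 j =
  W^-1 * (\sum_i \sum_j v i * v j * gij pi S i j)
  - W^-2 * ((\sum_i gi pi S i * v i) * (\sum_j gi pi S j * v j)).
  rewrite mulr_suml !mulr_sumr -sumrB; apply: eq_bigr => i _.
  rewrite !mulr_sumr -sumrB; apply: eq_bigr => j _.
  rewrite EH !mxE; field; by rewrite gt_eqF.
rewrite E hv mul0r mulr0 subr0 pmulr_rle0 // invr_gt0 //.
Qed.
End A.

Unset Implicit Arguments.

Theorem theorem1p1 (R : realType) (n r : nat) (pi : {set 'I_n} -> R) :
  (2 <= r)%N ->
  dist_on pi ->
  homogeneous r pi ->
  strongly_log_concave pi ->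
  mlsi_lower_bound pi (bx_walk pi) (r%:R)^-1.
Proof.
move=> r2 [pi0 s1] hom slc f fpos En0.
exact: (main_ineq pi0 hom fpos (quad_of_slc slc) r2 s1 En0).
Qed.
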